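(* Let $\Delta t_{\mathrm{CFL,gen}}$ be the generalized CFL limit of the whole region and, for each $1\le i\le n_x$, $1\le j\le n_y$, $1\le k\le n_z$, let $\Delta t^{(i,j,k)}_{\mathrm{CFL,gen}}$ be the generalized CFL limit of the single-cell region ($n_x=n_y=n_z=1$) formed by the primary cell with corners $(i,j,k)$ and $(i+1,j+1,k+1)$, with the same $\hbar,m,\Delta x,\Delta y,\Delta z$ and with potential $U_{i+a,j+b,k+c}$ ($a,b,c\in\{0,1\}$) at its local node $(a+1,b+1,c+1)$. Then $$\min_{i,j,k}\Delta t^{(i,j,k)}_{\mathrm{CFL,gen}}\le\Delta t_{\mathrm{CFL,gen}}.$$
   Context: Fix constants $\hbar>0$, $m>0$, cell sizes $\Delta x,\Delta y,\Delta z>0$ and positive integers $n_x,n_y,n_z$. A region is a box of $n_x\times n_y\times n_z$ primary cells of size $\Delta x\times\Delta y\times\Delta z$ with primary nodes $(i,j,k)$, $1\le i\le n_x+1$, $1\le j\le n_y+1$, $1\le k\le n_z+1$. Let $N=(n_x+1)(n_y+1)(n_z+1)$; node-indexed vectors use the ordering $i+(j-1)(n_x+1)+(k-1)(n_x+1)(n_y+1)$. Real potential values $U_{i,j,k}$ are given at the nodes; $D_U$ is the $N\times N$ diagonal matrix containing them. Let $I_p$ be the $p\times p$ identity, $\tilde I_p=\mathrm{diag}(\tfrac12,1,\dots,1,\tfrac12)$ ($p\times p$; $\tilde I_2=\tfrac12I_2$), $W_p=[0_{p\times1}\ I_p]-[I_p\ 0_{p\times 1}]$ ($p\times(p+1)$),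 $\otimes$ the Kronecker product. For a region define $D_V''=\Delta x\Delta y\Delta z\,\tilde I_{n_z+1}\otimes\tilde I_{n_y+1}\otimes\tilde I_{n_x+1}$; $D=[D_x\ D_y\ D_z]$ with $D_x=-I_{n_z+1}\otimes I_{n_y+1}\otimes W_{n_x}^T$, $D_y=-I_{n_z+1}\otimes W_{n_y}^T\otimes I_{n_x+1}$, $D_z=-W_{n_z}^T\otimes I_{n_y+1}\otimes I_{n_x+1}$; $D_S''=\mathrm{diag}(\Delta y\Delta z\,\tilde I_{n_z+1}\otimes\tilde I_{n_y+1}\otimes I_{n_x},\ \Delta x\Delta z\,\tilde I_{n_z+1}\otimes I_{n_y}\otimes\tilde I_{n_x+1},\ \Delta x\Delta y\,I_{n_z}\otimes\tilde I_{n_y+1}\otimes\tilde I_{n_x+1})$; $D_l'=\mathrm{diag}(\Delta x\, I_{n_x(n_y+1)(n_z+1)},\ \Delta y\, I_{(n_x+1)n_y(n_z+1)},\ \Delta z\, I_{(n_x+1)(n_y+1)n_z})$; $H=\frac{\hbar^2}{2m}D D_S''(D_l')^{-1}D^T+D_V''D_U$. The generalized CFL limit of a region is $\Delta t_{\mathrm{CFL,gen}}=2/\rho\!\left(\frac{1}{\hbar}(D_V'')^{-1/2}H(D_V'')^{-1/2}\right)$, with $\rho$ the spectral radius. *)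

(* Defs.v *)
From HB Require Import structures.
From mathcomp Require Import all_boot all_order all_algebra.
From mathcomp Require Import classical_sets reals.
From mathcomp Require Import complex mxtens.
Set Implicit Arguments. Unset Strict Implicit. Unset Printing Implicit Defensive.
Import Order.TTheory GRing.Theory Num.Theory.
Local Open Scope ring_scope.
Local Open Scope classical_set_scope.

Section CFL.
Variable R : realType.

Definition spectral_radius (n : nat) (A : 'M[R]_n) : R :=
  sup [set r : R | exists l : R[i],
        eigenvalue (map_mx (fun x : R => Complex x 0) A) l /\ r = complex.Re `|l|].

Definition Itil (n : nat) : 'M[R]_n.+1 :=
  diag_mx (\row_(i < n.+1) (if (i == ord0) || (i == ord_max) then 2^-1 else 1)).

Definition Wmx (p : nat) : 'M[R]_(p, p.+1) :=
  row_mx (0 : 'M_(p, 1)) (1%:M : 'M_p)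
  - castmx (erefl p, addn1 p) (row_mx (1%:M : 'M_p) (0 : 'M_(p, 1))).

Section Region.
Variables (hbar m dx dy dz : R) (nx ny nz : nat).
(* potential at primary node (i,j,k), 0-indexed: i < nx+1 etc. *)
Variable U : 'I_nx.+1 -> 'I_ny.+1 -> 'I_nz.+1 -> R.

(* node index set, ordered as i + (j-1)(nx+1) + (k-1)(nx+1)(ny+1)
   via the Kronecker product index  k*((ny+1)(nx+1)) + (j*(nx+1) + i) *)
Local Notation N := (nz.+1 * (ny.+1 * nx.+1))%N.
Local Notation Ex := (nz.+1 * (ny.+1 * nx))%N.
Local Notation Ey := (nz.+1 * (ny * nx.+1))%N.
Local Notation Ez := (nz * (ny.+1 * nx.+1))%N.

Definition DU : 'M[R]_N :=
  diag_mx (\row_(p < N)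
    let kr := mxtens_unindex p in
    let ji := mxtens_unindex kr.2 in U ji.2 ji.1 kr.1).

Definition DV : 'M[R]_N := (dx * dy * dz) *: (Itil nz *t (Itil ny *t Itil nx)).

Definition Dx : 'M[R]_(N, Ex) :=
  - ((1%:M : 'M_nz.+1) *t ((1%:M : 'M_ny.+1) *t (Wmx nx)^T)).
Definition Dy : 'M[R]_(N, Ey) :=
  - ((1%:M : 'M_nz.+1) *t ((Wmx ny)^T *t (1%:M : 'M_nx.+1))).
Definition Dz : 'M[R]_(N, Ez) :=
  - ((Wmx nz)^T *t ((1%:M : 'M_ny.+1) *t (1%:M : 'M_nx.+1))).
Definition Dmx : 'M[R]_(N, Ex + (Ey + Ez)) := row_mx Dx (row_mx Dy Dz).

Definition DS : 'M[R]_(Ex + (Ey + Ez)) :=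
  block_mx ((dy * dz) *: (Itil nz *t (Itil ny *t (1%:M : 'M_nx)))) 0 0
    (block_mx ((dx * dz) *: (Itil nz *t ((1%:M : 'M_ny) *t Itil nx))) 0 0
              ((dx * dy) *: ((1%:M : 'M_nz) *t (Itil ny *t Itil nx)))).

Definition Dl : 'M[R]_(Ex + (Ey + Ez)) :=
  block_mx (dx%:M : 'M_Ex) 0 0 (block_mx (dy%:M : 'M_Ey) 0 0 (dz%:M : 'M_Ez)).

Definition Hmx : 'M[R]_N :=
  (hbar ^+ 2 / (2 * m)) *: (Dmx *m DS *m invmx Dl *m Dmx^T) + DV *m DU.

(* (D_V'')^{-1/2}: D_V'' is diagonal with positive entries *)
Definition DVinvsqrt : 'M[R]_N := diag_mx (\row_(p < N) (Num.sqrt (DV p p))^-1).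

Definition cfl_gen : R :=
  2 / spectral_radius (hbar^-1 *: (DVinvsqrt *m Hmx *m DVinvsqrt)).
End Region.

Definition cfl_cell (hbar m dx dy dz : R) (nx ny nz : nat)
  (U : 'I_nx.+1 -> 'I_ny.+1 -> 'I_nz.+1 -> R) (i : 'I_nx) (j : 'I_ny) (k : 'I_nz) : R :=
  @cfl_gen hbar m dx dy dz 1%N 1%N 1%N
    (fun (a : 'I_2) (b : 'I_2) (c : 'I_2) =>
       U (inord (i + a)) (inord (j + b)) (inord (k + c))).
End CFL.

(* Main.v *)
Require Import Defs.
From HB Require Import structures.
From mathcomp Require Import all_boot all_order all_algebra.
From mathcomp Require Import classical_sets reals.
From mathcomp Require Import complex mxtens.
From mathcomp Require Import sesquilinear spectral.
From mathcomp Require Import ring lra zify.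
Import Order.TTheory GRing.Theory Num.Theory.
Set Implicit Arguments. Unset Strict Implicit. Unset Printing Implicit Defensive.
Local Open Scope ring_scope.

Section LA.
Variable R : realType.
Local Open Scope sesquilinear_scope.

Definition dot n (u w : 'rV[R]_n) := (u *m w^T) 0 0.
Definition qf n (A : 'M[R]_n) (u : 'rV[R]_n) := (u *m A *m u^T) 0 0.

Lemma Re_sum (I : Type) (r : seq I) (P : pred I) (F : I -> R[i]) :
  complex.Re (\sum_(i <- r | P i) F i) = \sum_(i <- r | P i) complex.Re (F i).
Proof. by apply: (big_morph (@complex.Re R)) => // -[x1 y1] [x2 y2]. Qed.

Lemma Im_sum (I : Type) (r : seq I) (P : pred I) (F : I -> R[i]) :
  complex.Im (\sum_(i <- r | P i) F i) = \sum_(i <- r | P i) complex.Im (F i).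
Proof. by apply: (big_morph (@complex.Im R)) => // -[x1 y1] [x2 y2]. Qed.

Lemma dotC n (u w : 'rV[R]_n) : dot u w = dot w u.
Proof. by rewrite /dot -[(u *m w^T)%R]trmxK trmx_mul trmxK mxE. Qed.

Lemma dotE n (u w : 'rV[R]_n) : dot u w = \sum_j u 0 j * w 0 j.
Proof. by rewrite /dot !mxE; apply: eq_bigr => j _; rewrite mxE. Qed.

Lemma dot_ge0 n (u : 'rV[R]_n) : 0 <= dot u u.
Proof. by rewrite dotE sumr_ge0 // => j _; rewrite -expr2 sqr_ge0. Qed.

Lemma dot_eq0 n (u : 'rV[R]_n) : dot u u = 0 -> u = 0.
Proof.
rewrite dotE => /psumr_eq0P H; apply/rowP => j; rewrite mxE.
have := H (fun j _ => sqr_ge0 (u 0 j)) j isT.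
by move/eqP; rewrite mulf_eq0 orbb => /eqP.
Qed.


Notation toC A := (map_mx (fun x : R => Complex x 0) A).

Lemma qf_sym n (A : 'M[R]_n) (a b : 'rV[R]_n) : A^T = A ->
  (a *m A *m b^T) 0 0 = (b *m A *m a^T) 0 0.
Proof.
move=> sA; transitivity ((a *m A *m b^T)^T 0 0); first by rewrite [RHS]mxE.
by rewrite !trmx_mul trmxK sA mulmxA.
Qed.

Lemma eig_bound n (A : 'M[R]_n) (M : R) (l : R[i]) :
  A^T = A -> (forall x : 'rV[R]_n, `|qf A x| <= M * dot x x) ->
  eigenvalue (toC A) l -> complex.Re `|l| <= M.
Proof.
move=> sA hM /eigenvalueP [v vA vn0].
set a := map_mx (@complex.Re R) v; set b := map_mx (@complex.Im R) v.
have eqa : a *m A = complex.Re l *: a - complex.Im l *: b.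
  apply/rowP => k; move/rowP: (vA) => /(_ k) /(congr1 (@complex.Re R)).
  rewrite /= !mxE Re_sum => E.
  transitivity (complex.Re (l * v 0 k)); last by case: (l) => ? ?; case: (v 0 k) => ? ? /=.
  rewrite -E; apply: eq_bigr => j _; rewrite !mxE.
  by case: (v 0 j) => x y /=; rewrite mulr0 subr0.
have eqb : b *m A = complex.Im l *: a + complex.Re l *: b.
  apply/rowP => k; move/rowP: (vA) => /(_ k) /(congr1 (@complex.Im R)).
  rewrite /= !mxE Im_sum => E.
  transitivity (complex.Im (l * v 0 k)); last first.
    by case: (l) => ? ?; case: (v 0 k) => ? ? /=; rewrite addrC.
  rewrite -E; apply: eq_bigr => j _; rewrite !mxE.
  by case: (v 0 j) => x y /=; rewrite mulr0 add0r.
have qa : qf A a = complex.Re l * dot a a - complex.Im l * dot b a.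
  by rewrite /qf /dot eqa mulmxBl -!scalemxAl !mxE.
have qb : qf A b = complex.Im l * dot a b + complex.Re l * dot b b.
  by rewrite /qf /dot eqb mulmxDl -!scalemxAl !mxE.
have sab : (a *m A *m b^T) 0 0 = complex.Re l * dot a b - complex.Im l * dot b b.
  by rewrite /dot eqa mulmxBl -!scalemxAl !mxE.
have sba : (b *m A *m a^T) 0 0 = complex.Im l * dot a a + complex.Re l * dot b a.
  by rewrite /dot eqb mulmxDl -!scalemxAl !mxE.
have Npos : 0 < dot a a + dot b b.
  rewrite lt_def paddr_eq0 ?dot_ge0 // addr_ge0 ?dot_ge0 // andbT.
  apply/negP => /andP [/eqP /dot_eq0 a0 /eqP /dot_eq0 b0]; move/eqP: vn0; apply.
  apply/rowP => j; move/rowP: a0 => /(_ j); move/rowP: b0 => /(_ j).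
  by rewrite !mxE; case: (v 0 j) => x y /= -> ->.
have Im0 : complex.Im l = 0.
  have := qf_sym a b sA; rewrite sab sba (dotC b a) => E.
  have : complex.Im l * (dot a a + dot b b) = 0.
    by rewrite mulrDr; lra.
  by move/eqP; rewrite mulf_eq0 (gt_eqF Npos) orbF => /eqP.
have hRe : complex.Re `|l| = `|complex.Re l|.
  rewrite normc_def /= Im0.
  have -> : (0:R) ^+ 2 = 0 by rewrite expr2 mulr0.
  by rewrite addr0 sqrtr_sqr.
have e1 : qf A a + qf A b = complex.Re l * (dot a a + dot b b).
  by rewrite qa qb Im0 (dotC b a); ring.
rewrite hRe -(ler_pM2r Npos) -[X in _ * X <= _](gtr0_norm Npos) -normrM -e1 mulrDr.
by apply: le_trans (ler_normD _ _) _; apply: lerD; apply: hM.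
Qed.

Lemma toC_real (x : R) : (Complex x 0 : R[i]) \is Num.real.
Proof. by rewrite complex_real. Qed.

Lemma normC_toC (x : R) : `|real_complex R x| = real_complex R `|x|.
Proof.
rewrite normc_def /=; have -> : (0:R) ^+ 2 = 0 by rewrite expr2 mulr0.
by rewrite addr0 sqrtr_sqr.
Qed.

Lemma normC_Re (z : R[i]) : `|z| = real_complex R (complex.Re `|z|).
Proof. by rewrite normc_def. Qed.

Lemma crude_bound n (A : 'M[R]_n) : exists M : R,
  forall x : 'rV[R]_n, `|qf A x| <= M * dot x x.
Proof.
exists (\sum_i \sum_j `|A i j|) => x.
have qE : qf A x = \sum_j \sum_i x 0 i * A i j * x 0 j.
  rewrite /qf !mxE; apply: eq_bigr => j _.
  by rewrite !mxE mulr_suml.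
have hxx i j : `|x 0 i| * `|x 0 j| <= dot x x.
  have hi k : x 0 k ^+ 2 <= dot x x.
    rewrite dotE (bigD1 k) //= -expr2 lerDl sumr_ge0 // => l _.
    by rewrite -expr2 sqr_ge0.
  have : 0 <= (`|x 0 i| - `|x 0 j|) ^+ 2 by rewrite sqr_ge0.
  have := hi i; have := hi j; rewrite -(real_normK (num_real (x 0 i))).
  rewrite -(real_normK (num_real (x 0 j))); nra.
rewrite qE (exchange_big) /= mulr_suml; apply: le_trans (ler_norm_sum _ _ _) _.
apply: ler_sum => i _; rewrite mulr_suml; apply: le_trans (ler_norm_sum _ _ _) _.
apply: ler_sum => j _; rewrite !normrM [_ * `|A i j|]mulrC -mulrA.
by rewrite ler_wpM2l.
Qed.

Definition eigset n (A : 'M[R]_n) : set R :=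
  [set r : R | exists l : R[i], eigenvalue (toC A) l /\ r = complex.Re `|l|].

Lemma spectral_radiusE n (A : 'M[R]_n) : spectral_radius A = sup (eigset A).
Proof. by []. Qed.

Lemma eigset_ub n (A : 'M[R]_n) : A^T = A -> has_ubound (eigset A).
Proof.
move=> sA; have [M hM] := crude_bound A; exists M => r [l [el ->]].
exact: eig_bound sA hM el.
Qed.

Lemma eig_le_spec n (A : 'M[R]_n) (l : R[i]) : A^T = A ->
  eigenvalue (toC A) l -> complex.Re `|l| <= spectral_radius A.
Proof.
move=> sA el; rewrite spectral_radiusE; apply: (ub_le_sup (eigset_ub sA)).
by exists l.
Qed.

Lemma spec_le n (A : 'M[R]_n) (M : R) : (0 < n)%N -> A^T = A ->
  (forall x : 'rV[R]_n, `|qf A x| <= M * dot x x) -> spectral_radius A <= M.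
Proof.
move=> n0 sA hM; rewrite spectral_radiusE; apply: ge_sup.
  have [l el] := Theorem7' (toC A) n0; by exists (complex.Re `|l|), l.
by move=> r [l [el ->]]; exact: eig_bound sA hM el.
Qed.

Lemma delta_diag n (d : 'rV[R[i]]_n) (i : 'I_n) :
  (delta_mx 0 i : 'rV[R[i]]_n) *m diag_mx d = d 0 i *: delta_mx 0 i.
Proof.
apply/matrixP => a b; rewrite mul_mx_diag !mxE.
by case: (eqVneq b i) => [->|nb]; rewrite ?andbF ?mul0r ?mulr0 // mulrC.
Qed.

Lemma spec_ge n (A : 'M[R]_n) (x : 'rV[R]_n) : A^T = A ->
  `|qf A x| <= spectral_radius A * dot x x.
Proof.
move=> sA.
pose Ac : 'M[R[i]]_n := map_mx (real_complex R) A.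
have herm : Ac \is hermsymmx.
  apply/is_hermitianmxP; rewrite expr0 scale1r; apply/matrixP => i j.
  rewrite !mxE conj_Creal ?toC_real //.
  by rewrite -{1}sA mxE.
have /orthomx_spectralP AE := hermitian_normalmx herm.
move: AE; set P := spectralmx Ac; set d := spectral_diag Ac => AE.
have Pu : P \is unitarymx := spectral_unitarymx Ac.
have PU : P \in unitmx := spectral_unit Ac.
rewrite invmx_unitary // in AE.
have eig i : eigenvalue (toC A) (d 0 i).
  apply/eigenvalueP; exists (row i P).
    rewrite -[toC A]/Ac AE rowE !mulmxA mulmxtVK // delta_diag.
    by rewrite -scalemxAl.
  apply/negP => /eqP h.
  have : (delta_mx 0 i : 'rV_n) *m P *m invmx P = 0 by rewrite -rowE h mul0mx.
  rewrite mulmxK // => /matrixP /(_ 0 i); rewrite !mxE !eqxx /=.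
  by move/eqP; rewrite oner_eq0.
pose xc : 'rV[R[i]]_n := map_mx (real_complex R) x.
have xcT : xc^t* = xc^T.
  by apply/matrixP => i j; rewrite !mxE conj_Creal ?toC_real.
have e1 : real_complex R (qf A x) = (xc *m Ac *m xc^t*) 0 0.
  by rewrite xcT /xc /Ac map_trmx -!map_mxM mxE.
have e1' : real_complex R (dot x x) = (xc *m xc^t*) 0 0.
  by rewrite xcT /xc map_trmx -!map_mxM mxE.
set w := xc *m P^t*.
have wT : w^t* = P *m xc^t* by rewrite /w trmx_mul map_mxM trmxCK.
have e2 : (xc *m Ac *m xc^t*) 0 0 = \sum_i d 0 i * `|w 0 i| ^+ 2.
  rewrite AE !mulmxA -/w -mulmxA -wT mxE; apply: eq_bigr => i _.
  by rewrite mul_mx_diag !mxE normCK mulrCA mulrA.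
have e3 : (xc *m xc^t*) 0 0 = \sum_i `|w 0 i| ^+ 2.
  have -> : xc *m xc^t* = w *m w^t* by rewrite wT /w mulmxA mulmxKtV.
  by rewrite mxE; apply: eq_bigr => i _; rewrite !mxE normCK.
have hd i : `|d 0 i| <= real_complex R (spectral_radius A).
  by rewrite normC_Re lecR eig_le_spec.
rewrite -lecR -normC_toC rmorphM /= e1 e1' e2 e3 mulr_sumr.
apply: le_trans (ler_norm_sum _ _ _) _; apply: ler_sum => i _.
by rewrite normrM normrX normr_id ler_wpM2r ?exprn_ge0.
Qed.

End LA.

Section Gen.
Variable R : realType.

Lemma sum_tens m n (F : 'I_(m*n) -> R) :
  \sum_p F p = \sum_(a < m) \sum_(b < n) F (mxtens_index (a, b)).
Proof.
rewrite pair_big /= (reindex (@mxtens_index m n)) /=; first by apply: eq_bigr => -[a b].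
by exists (@mxtens_unindex m n) => x _; [apply: mxtens_indexK | apply: mxtens_unindexK].
Qed.

Lemma sum_delta n (a : 'I_n) (F : 'I_n -> R) : \sum_(i < n) (i == a)%:R * F i = F a.
Proof.
rewrite (bigD1 a) //= eqxx mul1r big1 ?addr0 // => i /negPf ->; by rewrite mul0r.
Qed.

Lemma sum_delta_nat n k (F : 'I_n.+1 -> R) : (k <= n)%N ->
  \sum_(q < n.+1) ((q : nat) == k)%:R * F q = F (inord k).
Proof.
move=> kn; rewrite -(sum_delta (inord k)); apply: eq_bigr => q _.
by rewrite -(inj_eq val_inj) /= inordK.
Qed.

Lemma Wmx_entry n (i : 'I_n) (q : 'I_n.+1) :
  Wmx R n i q = ((q : nat) == i.+1)%:R - ((q : nat) == i)%:R.
Proof.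
rewrite /Wmx !mxE castmxE /= mxE.
case: splitP => [j /= qj|j /= qj]; case: splitP => [j' /= qj'|j' /= qj']; rewrite !mxE.
all: rewrite -?val_eqE /= ?qj.
all: try change (@nat_of_ord (1 + n) q) with (@nat_of_ord n.+1 q) in qj.
all: move: (ltn_ord i) (ltn_ord j) (ltn_ord j') (ltn_ord q) qj qj'.
all: rewrite -/(nat_of_ord q) => ? ? ? ? ? ?.
all: repeat (case: eqP => /= ?); rewrite ?(subrr, subr0, sub0r) //; exfalso; lia.
Qed.

Lemma mulW n (w : 'rV[R]_n.+1) (i : 'I_n) :
  (w *m (Wmx R n)^T) 0 i = w 0 (inord i.+1) - w 0 (inord i).
Proof.
rewrite mxE.
under eq_bigr => q _ do rewrite mxE Wmx_entry mulrBr.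
rewrite sumrB; congr (_ - _).
  rewrite -(sum_delta_nat (fun q => w 0 q)) //; apply: eq_bigr => q _; exact: mulrC.
rewrite -(sum_delta_nat (fun q => w 0 q)) 1?ltnW //; apply: eq_bigr => q _; exact: mulrC.
Qed.

Lemma tens_entry m n m' n' (v : 'rV[R]_(m*n)) (A : 'M[R]_(m,m')) (B : 'M[R]_(n,n'))
  (a : 'I_m') (c : 'I_n') :
  (v *m (A *t B)) 0 (mxtens_index (a, c)) =
  \sum_(a' < m) \sum_(b < n) v 0 (mxtens_index (a', b)) * (A a' a * B b c).
Proof.
rewrite mxE sum_tens; apply: eq_bigr => a' _; apply: eq_bigr => b _.
by rewrite tensmxE.
Qed.

Lemma tens1_entry m n n' (v : 'rV[R]_(m*n)) (B : 'M[R]_(n,n')) (a : 'I_m) (c : 'I_n') :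
  (v *m (1%:M *t B)) 0 (mxtens_index (a, c)) =
  \sum_(b < n) v 0 (mxtens_index (a, b)) * B b c.
Proof.
rewrite tens_entry -(sum_delta a (fun a' => \sum_(b < n) v 0 (mxtens_index (a', b)) * B b c)).
apply: eq_bigr => a' _; rewrite mulr_sumr; apply: eq_bigr => b _; rewrite mxE.
by rewrite mulrCA mulrA.
Qed.

Lemma tens_diag m n (d1 : 'rV[R]_m) (d2 : 'rV[R]_n) :
  diag_mx d1 *t diag_mx d2 =
  diag_mx (\row_p (d1 0 (mxtens_unindex p).1 * d2 0 (mxtens_unindex p).2)).
Proof.
apply/matrixP => p q; case: (mxtens_indexP p) => a b; case: (mxtens_indexP q) => c e.
rewrite tensmxE !mxE mxtens_indexK /= (inj_eq (can_inj (@mxtens_indexK m n))).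
rewrite xpair_eqE.
by rewrite mulrnAl mulrnAr -mulrnA mulnb andbC.
Qed.

Lemma qf_diag n (u : 'rV[R]_n) (d : 'rV[R]_n) :
  (u *m diag_mx d *m u^T) 0 0 = \sum_p d 0 p * u 0 p ^+ 2.
Proof.
rewrite mul_mx_diag mxE; apply: eq_bigr => p _; rewrite !mxE; ring.
Qed.

Lemma qf_diag' n (u : 'rV[R]_n) (d : 'rV[R]_n) :
  qf (diag_mx d) u = \sum_p d 0 p * u 0 p ^+ 2.
Proof. exact: qf_diag. Qed.

Definition tw (n i : nat) : R := if (i == 0)%N || (i == n) then 2^-1 else 1.

Lemma Itil_diag n : Itil R n = diag_mx (\row_(i < n.+1) tw n i).
Proof.
by congr diag_mx; apply/rowP => i; rewrite !mxE /tw.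
Qed.

Lemma tens11 m n : (1%:M *t 1%:M : 'M[R]_(m*n)) = 1%:M.
Proof.
apply/matrixP => p q; case: (mxtens_indexP p) => a b; case: (mxtens_indexP q) => c e.
rewrite tensmxE !mxE (inj_eq (can_inj (@mxtens_indexK m n))) xpair_eqE.
by rewrite -natrM mulnb.
Qed.

Lemma tens_1r_entry m n m' (v : 'rV[R]_(m*n)) (A : 'M[R]_(m,m')) (a : 'I_m') (c : 'I_n) :
  (v *m (A *t 1%:M)) 0 (mxtens_index (a, c)) =
  ((\row_a' v 0 (mxtens_index (a', c))) *m A) 0 a.
Proof.
rewrite tens_entry mxE; apply: eq_bigr => a' _; rewrite mxE.
rewrite -(sum_delta c (fun b => v 0 (mxtens_index (a', b)) * A a' a)).
by apply: eq_bigr => b _; rewrite mxE; ring.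
Qed.

Lemma row_sum_entry m n p (v : 'rV[R]_(m*n)) (B : 'M[R]_(n,p)) (k : 'I_m) (c : 'I_p) :
  \sum_(b < n) v 0 (mxtens_index (k, b)) * B b c =
  ((\row_b v 0 (mxtens_index (k, b))) *m B) 0 c.
Proof. by rewrite mxE; apply: eq_bigr => b _; rewrite mxE. Qed.

Lemma qf_block m n (a : 'rV[R]_m) (b : 'rV[R]_n) (A : 'M[R]_m) (B : 'M[R]_n) :
  qf (block_mx A 0 0 B) (row_mx a b) = qf A a + qf B b.
Proof.
rewrite /qf mul_row_block ?mulmx0 ?mul0mx ?addr0 ?add0r tr_row_mx mul_row_col.
by rewrite mxE.
Qed.

Lemma qfZ n c (A : 'M[R]_n) u : qf (c *: A) u = c * qf A u.
Proof. by rewrite /qf -scalemxAr -scalemxAl mxE. Qed.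

Lemma qfD n (A B : 'M[R]_n) u : qf (A + B) u = qf A u + qf B u.
Proof. by rewrite /qf mulmxDr mulmxDl mxE. Qed.

Lemma qf_conj n p (D : 'M[R]_(n,p)) (M : 'M[R]_p) u :
  qf (D *m M *m D^T) u = qf M (u *m D).
Proof. by rewrite /qf trmx_mul !mulmxA. Qed.

Lemma trZ m n (c : R) (A : 'M[R]_(m,n)) : (c *: A)^T = c *: A^T.
Proof. by apply/matrixP => i j; rewrite !mxE. Qed.

Lemma scale_diag n (c : R) (d : 'rV[R]_n) : c *: diag_mx d = diag_mx (c *: d).
Proof. by apply/matrixP => i j; rewrite !mxE mulrnAr. Qed.

Section Norm.
Variables (n : nat) (dv : 'rV[R]_n) (hb : R).
Hypothesis dvpos : forall p, 0 < dv 0 p.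
Let S := diag_mx (\row_p (Num.sqrt (dv 0 p))^-1).

Lemma norm_qf (H : 'M[R]_n) (x : 'rV[R]_n) : qf (hb^-1 *: (S *m H *m S)) x = hb^-1 * qf H (x *m S).
Proof. by rewrite qfZ -{2}[S]tr_diag_mx qf_conj. Qed.

Lemma norm_dot (x : 'rV[R]_n) : dot x x = qf (diag_mx dv) (x *m S).
Proof.
rewrite dotE qf_diag'; apply: eq_bigr => p _.
rewrite mul_mx_diag !mxE exprMn exprVn sqr_sqrtr ?ltW // mulrCA divff ?mulr1 ?expr2 //.
by rewrite gt_eqF.
Qed.

Lemma norm_surj (w : 'rV[R]_n) : exists x, x *m S = w.
Proof.
exists (w *m diag_mx (\row_p Num.sqrt (dv 0 p))).
rewrite -mulmxA mulmx_diag; apply/rowP => p; rewrite mul_mx_diag !mxE divff ?mulr1 //.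
by rewrite gt_eqF // sqrtr_gt0.
Qed.

Lemma norm_sym (H : 'M[R]_n) : H^T = H -> (hb^-1 *: (S *m H *m S))^T = hb^-1 *: (S *m H *m S).
Proof. by move=> sH; rewrite trZ !trmx_mul tr_diag_mx sH mulmxA. Qed.

End Norm.

End Gen.

Section Region.
Variable R : realType.
Variables (hbar mm dx dy dz : R) (nx ny nz : nat).
Variable U : 'I_nx.+1 -> 'I_ny.+1 -> 'I_nz.+1 -> R.
Local Notation N := (nz.+1 * (ny.+1 * nx.+1))%N.

Definition nid (k j i : nat) : 'I_N :=
  mxtens_index (inord k, mxtens_index (inord j, inord i)).
Definition ug (u : 'rV[R]_N) k j i := u 0 (nid k j i).

Lemma nid_val (k : 'I_nz.+1) (j : 'I_ny.+1) (i : 'I_nx.+1) :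
  nid k j i = mxtens_index (k, mxtens_index (j, i)).
Proof. by rewrite /nid !inord_val. Qed.

Lemma qf_DV (u : 'rV[R]_N) : qf (DV dx dy dz nx ny nz) u =
  dx * dy * dz * \sum_(k < nz.+1) \sum_(j < ny.+1) \sum_(i < nx.+1)
     tw R nz k * tw R ny j * tw R nx i * ug u k j i ^+ 2.
Proof.
rewrite /qf /DV -scalemxAr -scalemxAl mxE; congr (_ * _).
rewrite !Itil_diag !tens_diag qf_diag sum_tens; apply: eq_bigr => k _.
rewrite sum_tens; apply: eq_bigr => j _; apply: eq_bigr => i _.
by rewrite /ug nid_val !mxE !mxtens_indexK /= mulrA.
Qed.

Lemma Dx_entry (u : 'rV[R]_N) (k : 'I_nz.+1) (j : 'I_ny.+1) (i : 'I_nx) :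
  (u *m Dx R nx ny nz) 0 (mxtens_index (k, mxtens_index (j, i))) =
  - (ug u k j i.+1 - ug u k j i).
Proof.
rewrite /Dx mulmxN mxE; congr (- _).
rewrite tens1_entry row_sum_entry tens1_entry row_sum_entry mulW !mxE.
by rewrite /ug /nid !inord_val.
Qed.

Lemma Dy_entry (u : 'rV[R]_N) (k : 'I_nz.+1) (j : 'I_ny) (i : 'I_nx.+1) :
  (u *m Dy R nx ny nz) 0 (mxtens_index (k, mxtens_index (j, i))) =
  - (ug u k j.+1 i - ug u k j i).
Proof.
rewrite /Dy mulmxN mxE; congr (- _).
rewrite tens1_entry row_sum_entry tens_1r_entry mulW !mxE.
by rewrite /ug /nid !inord_val.
Qed.

Lemma Dz_entry (u : 'rV[R]_N) (k : 'I_nz) (j : 'I_ny.+1) (i : 'I_nx.+1) :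
  (u *m Dz R nx ny nz) 0 (mxtens_index (k, mxtens_index (j, i))) =
  - (ug u k.+1 j i - ug u k j i).
Proof.
rewrite /Dz mulmxN mxE; congr (- _).
rewrite tens11 tens_1r_entry mulW !mxE.
by rewrite /ug /nid !inord_val.
Qed.

Hypotheses (dx0 : dx != 0) (dy0 : dy != 0) (dz0 : dz != 0).

Lemma Dl_inv : invmx (Dl dx dy dz nx ny nz) =
  block_mx (dx^-1%:M) 0 0 (block_mx (dy^-1%:M) 0 0 (dz^-1%:M)).
Proof.
set B := block_mx _ _ _ _.
have DB : Dl dx dy dz nx ny nz *m B = 1%:M.
  rewrite /Dl /B mulmx_block !mulmx0 !mul0mx !addr0 !add0r mulmx_block.
  rewrite !mulmx0 !mul0mx !addr0 !add0r -!scalar_mxM !divff //.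
  by rewrite -!scalar_mx_block.
have Du := (mulmx1_unit DB).1.
by rewrite -[RHS](mulKmx Du) DB mulmx1.
Qed.

Definition Kin (u : 'rV[R]_N) : R :=
  dy * dz / dx * \sum_(k < nz.+1) \sum_(j < ny.+1) \sum_(i < nx)
     tw R nz k * tw R ny j * (ug u k j i.+1 - ug u k j i) ^+ 2
  + dx * dz / dy * \sum_(k < nz.+1) \sum_(j < ny) \sum_(i < nx.+1)
     tw R nz k * tw R nx i * (ug u k j.+1 i - ug u k j i) ^+ 2
  + dx * dy / dz * \sum_(k < nz) \sum_(j < ny.+1) \sum_(i < nx.+1)
     tw R ny j * tw R nx i * (ug u k.+1 j i - ug u k j i) ^+ 2.

Lemma qf_K (u : 'rV[R]_N) :
  qf (Dmx R nx ny nz *m DS dx dy dz nx ny nz *m invmx (Dl dx dy dz nx ny nz)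
      *m (Dmx R nx ny nz)^T) u = Kin u.
Proof.
rewrite -(mulmxA (Dmx _ _ _ _)) qf_conj Dl_inv /DS /Dmx.
rewrite mulmx_block !mulmx0 !mul0mx !addr0 !add0r mulmx_block.
rewrite !mulmx0 !mul0mx !addr0 !add0r !mul_mx_scalar !mul_mx_row !qf_block !qfZ.
rewrite /Kin -!addrA; congr (_ + (_ + _)).
- rewrite mulrA [dx^-1 * _]mulrC; congr (_ * _).
  rewrite -diag_const_mx !Itil_diag !tens_diag qf_diag' sum_tens; apply: eq_bigr => k _.
  rewrite sum_tens; apply: eq_bigr => j _; apply: eq_bigr => i _.
  by rewrite Dx_entry !mxE !mxtens_indexK /= sqrrN mulr1.
- rewrite mulrA [dy^-1 * _]mulrC; congr (_ * _).
  rewrite -diag_const_mx !Itil_diag !tens_diag qf_diag' sum_tens; apply: eq_bigr => k _.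
  rewrite sum_tens; apply: eq_bigr => j _; apply: eq_bigr => i _.
  by rewrite Dy_entry !mxE !mxtens_indexK /= sqrrN mul1r.
- rewrite mulrA [dz^-1 * _]mulrC; congr (_ * _).
  rewrite -diag_const_mx !Itil_diag !tens_diag qf_diag' sum_tens; apply: eq_bigr => k _.
  rewrite sum_tens; apply: eq_bigr => j _; apply: eq_bigr => i _.
  by rewrite Dz_entry !mxE !mxtens_indexK /= sqrrN mul1r.
Qed.

Definition Pot (u : 'rV[R]_N) : R :=
  dx * dy * dz * \sum_(k < nz.+1) \sum_(j < ny.+1) \sum_(i < nx.+1)
     tw R nz k * tw R ny j * tw R nx i * U i j k * ug u k j i ^+ 2.

Lemma qf_Pot (u : 'rV[R]_N) : qf (DV dx dy dz nx ny nz *m DU U) u = Pot u.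
Proof.
rewrite /DV -scalemxAl qfZ /Pot; congr (_ * _).
rewrite !Itil_diag !tens_diag /DU mulmx_diag qf_diag' sum_tens; apply: eq_bigr => k _.
rewrite sum_tens; apply: eq_bigr => j _; apply: eq_bigr => i _.
by rewrite !mxE !mxtens_indexK /= /ug nid_val mulrA.
Qed.

Lemma qf_H (u : 'rV[R]_N) :
  qf (Hmx hbar mm dx dy dz U) u = hbar ^+ 2 / (2 * mm) * Kin u + Pot u.
Proof. by rewrite /Hmx qfD qfZ qf_K qf_Pot. Qed.

Definition dvr : 'rV[R]_N := (dx * dy * dz) *:
  (\row_p (tw R nz (mxtens_unindex p).1 *
     (\row_p0 (tw R ny (mxtens_unindex p0).1 * tw R nx (mxtens_unindex p0).2)) 0
        (mxtens_unindex p).2)).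

Lemma DV_diagE : DV dx dy dz nx ny nz = diag_mx dvr.
Proof.
rewrite /DV !Itil_diag !tens_diag scale_diag; congr (diag_mx (_ *: _)).
by apply/rowP => p; rewrite !mxE.
Qed.

Lemma tw_gt0 n i : 0 < tw R n i.
Proof. by rewrite /tw; case: ifP => _; rewrite ?invr_gt0 ?ltr0n ?ltr01. Qed.

Lemma dvr_pos : 0 < dx -> 0 < dy -> 0 < dz -> forall p, 0 < dvr 0 p.
Proof.
move=> hx hy hz p; rewrite /dvr !mxE.
by rewrite !mulr_gt0 ?tw_gt0.
Qed.

Lemma DVinvsqrtE : DVinvsqrt dx dy dz nx ny nz =
  diag_mx (\row_p (Num.sqrt (dvr 0 p))^-1).
Proof.
rewrite /DVinvsqrt DV_diagE; congr diag_mx; apply/rowP => p.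
by rewrite !mxE eqxx mulr1n.
Qed.

Lemma E_form : DS dx dy dz nx ny nz *m invmx (Dl dx dy dz nx ny nz) =
  block_mx ((dx^-1 * (dy * dz)) *: (Itil R nz *t (Itil R ny *t 1%:M))) 0 0
   (block_mx ((dy^-1 * (dx * dz)) *: (Itil R nz *t (1%:M *t Itil R nx))) 0 0
             ((dz^-1 * (dx * dy)) *: (1%:M *t (Itil R ny *t Itil R nx)))).
Proof.
rewrite Dl_inv /DS mulmx_block !mulmx0 !mul0mx !addr0 !add0r mulmx_block.
by rewrite !mulmx0 !mul0mx !addr0 !add0r !mul_mx_scalar !scalerA.
Qed.

Lemma H_sym : (Hmx hbar mm dx dy dz U)^T = Hmx hbar mm dx dy dz U.
Proof.
have eK : Dmx R nx ny nz *m DS dx dy dz nx ny nz *m invmx (Dl dx dy dz nx ny nz)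
   *m (Dmx R nx ny nz)^T = Dmx R nx ny nz *m (DS dx dy dz nx ny nz *m
   invmx (Dl dx dy dz nx ny nz)) *m (Dmx R nx ny nz)^T by rewrite !mulmxA.
have sE : (DS dx dy dz nx ny nz *m invmx (Dl dx dy dz nx ny nz))^T =
   DS dx dy dz nx ny nz *m invmx (Dl dx dy dz nx ny nz).
  rewrite E_form tr_block_mx !trmx0 tr_block_mx !trmx0.
  by rewrite !trZ !trmx_tens /Itil !tr_diag_mx !trmx1.
rewrite /Hmx linearD /= trZ eK trmx_mul trmx_mul trmxK sE mulmxA.
by rewrite trmx_mul DV_diagE /DU !tr_diag_mx diag_mxC.
Qed.

End Region.

Section Dec.
Variable R : realType.

Definition W (b : bool) (n : nat) (f : nat -> R) : R :=
  if b then \sum_(k < n.+1) tw R n k * f k else \sum_(k < n) f k.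

Lemma W_ext (b : bool) n f g : (forall k, (k < n + b)%N -> f k = g k) -> W b n f = W b n g.
Proof.
move=> fg; rewrite /W; case: b fg => fg; apply: eq_bigr => k _; rewrite fg //.
  by rewrite addn1.
by rewrite addn0.
Qed.

Lemma W_sum b n p (F : nat -> 'I_p -> R) :
  W b n (fun k => \sum_(i < p) F k i) = \sum_(i < p) W b n (fun k => F k i).
Proof.
rewrite /W; case: b; last exact: exchange_big.
rewrite exchange_big /=; apply: eq_bigr => k _; by rewrite mulr_sumr.
Qed.


Lemma tw1 (a : nat) : (a < 2)%N -> tw R 1 a = 2^-1.
Proof. by rewrite /tw; case: a => [|[|]]. Qed.

Lemma W_dec b n f : (0 < n)%N -> W b n f = \sum_(k < n) W b 1 (fun a => f (k + a)%N).
Proof.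
move=> n0; rewrite /W; case: b; last first.
  by apply: eq_bigr => k _; rewrite big_ord1 addn0.
case: n n0 => // n _.
under [RHS]eq_bigr => k _ do rewrite big_ord_recr big_ord1 /= !tw1 // addn0 addn1.
rewrite big_split /= -!mulr_sumr.
have e1 : \sum_(i < n.+1) f i = f 0%N + \sum_(i < n) f i.+1 by rewrite big_ord_recl.
have e2 : \sum_(i < n.+1) f i.+1 = \sum_(i < n) f i.+1 + f n.+1 by rewrite big_ord_recr.
rewrite e1 e2 big_ord_recr big_ord_recl /=.
have -> : tw R n.+1 0 = 2^-1 by [].
have -> : tw R n.+1 n.+1 = 2^-1 by rewrite /tw eqxx orbT.
have -> : \sum_(i < n) tw R n.+1 (bump 0 i) * f (bump 0 i) = \sum_(i < n) f i.+1.
  apply: eq_bigr => i _; rewrite /tw /bump /=.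
  have -> : (i.+1 == n.+1) = false by apply/negbTE; rewrite eqSS neq_ltn ltn_ord.
  by rewrite mul1r.
lra.
Qed.


Definition T b3 b2 b1 n3 n2 n1 (G : nat -> nat -> nat -> R) :=
  W b3 n3 (fun k => W b2 n2 (fun j => W b1 n1 (fun i => G k j i))).

Lemma T_dec b3 b2 b1 n3 n2 n1 G : (0 < n3)%N -> (0 < n2)%N -> (0 < n1)%N ->
  T b3 b2 b1 n3 n2 n1 G = \sum_(i < n1) \sum_(j < n2) \sum_(k < n3)
     T b3 b2 b1 1 1 1 (fun a b c => G (k + a)%N (j + b)%N (i + c)%N).
Proof.
move=> h3 h2 h1; rewrite /T.
transitivity (W b3 n3 (fun k => \sum_(i < n1) W b2 n2 (fun j =>
    W b1 1 (fun c => G k j (i + c)%N)))).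
  apply: W_ext => k _; rewrite -W_sum; apply: W_ext => j _; exact: W_dec.
transitivity (W b3 n3 (fun k => \sum_(i < n1) \sum_(j < n2) W b2 1 (fun b =>
    W b1 1 (fun c => G k (j + b)%N (i + c)%N)))).
  apply: W_ext => k _; apply: eq_bigr => i _; exact: W_dec.
rewrite W_sum; apply: eq_bigr => i _; rewrite W_sum; apply: eq_bigr => j _.
exact: W_dec.
Qed.

Lemma Ttt n3 n2 n1 G : T true true true n3 n2 n1 G =
  \sum_(k < n3.+1) \sum_(j < n2.+1) \sum_(i < n1.+1)
     tw R n3 k * tw R n2 j * tw R n1 i * G k j i.
Proof.
rewrite /T /W /=; apply: eq_bigr => k _; rewrite mulr_sumr; apply: eq_bigr => j _.
rewrite !mulr_sumr; apply: eq_bigr => i _; ring.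
Qed.

Lemma Ttf n3 n2 n1 G : T true true false n3 n2 n1 G =
  \sum_(k < n3.+1) \sum_(j < n2.+1) \sum_(i < n1)
     tw R n3 k * tw R n2 j * G k j i.
Proof.
rewrite /T /W /=; apply: eq_bigr => k _; rewrite mulr_sumr; apply: eq_bigr => j _.
rewrite !mulr_sumr; apply: eq_bigr => i _; ring.
Qed.

Lemma Tft n3 n2 n1 G : T true false true n3 n2 n1 G =
  \sum_(k < n3.+1) \sum_(j < n2) \sum_(i < n1.+1)
     tw R n3 k * tw R n1 i * G k j i.
Proof.
rewrite /T /W /=; apply: eq_bigr => k _; rewrite mulr_sumr; apply: eq_bigr => j _.
rewrite !mulr_sumr; apply: eq_bigr => i _; ring.
Qed.

Lemma Tff n3 n2 n1 G : T false true true n3 n2 n1 G =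
  \sum_(k < n3) \sum_(j < n2.+1) \sum_(i < n1.+1)
     tw R n2 j * tw R n1 i * G k j i.
Proof.
rewrite /T /W /=; apply: eq_bigr => k _; apply: eq_bigr => j _.
rewrite !mulr_sumr; apply: eq_bigr => i _; ring.
Qed.

Lemma T_ext (b3 b2 b1 : bool) n3 n2 n1 G G' :
  (forall k j i, (k < n3 + b3)%N -> (j < n2 + b2)%N -> (i < n1 + b1)%N ->
     G k j i = G' k j i) ->
  T b3 b2 b1 n3 n2 n1 G = T b3 b2 b1 n3 n2 n1 G'.
Proof.
move=> h; rewrite /T; apply: W_ext => k hk; apply: W_ext => j hj; apply: W_ext => i hi.
exact: h.
Qed.

Lemma T_lin b3 b2 b1 n3 n2 n1 (c : R) G G' :
  T b3 b2 b1 n3 n2 n1 (fun k j i => c * G k j i + G' k j i) =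
  c * T b3 b2 b1 n3 n2 n1 G + T b3 b2 b1 n3 n2 n1 G'.
Proof.
rewrite /T /W; case: b3; case: b2; case: b1;
  rewrite mulr_sumr -big_split; apply: eq_bigr => k _ /=;
  rewrite ?mulr_sumr -?big_split; apply: eq_bigr => j _ /=;
  rewrite ?mulr_sumr -?big_split; apply: eq_bigr => i _ /=; ring.
Qed.

End Dec.

Section TForms.
Variable R : realType.
Variables (hbar mm dx dy dz : R) (nx ny nz : nat).
Variable U : 'I_nx.+1 -> 'I_ny.+1 -> 'I_nz.+1 -> R.
Local Notation N := (nz.+1 * (ny.+1 * nx.+1))%N.
Hypotheses (dx0 : dx != 0) (dy0 : dy != 0) (dz0 : dz != 0).

Definition Fx (u : 'rV[R]_N) k j i := (ug u k j i.+1 - ug u k j i) ^+ 2.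
Definition Fy (u : 'rV[R]_N) k j i := (ug u k j.+1 i - ug u k j i) ^+ 2.
Definition Fz (u : 'rV[R]_N) k j i := (ug u k.+1 j i - ug u k j i) ^+ 2.
Definition Gp (u : 'rV[R]_N) k j i := U (inord i) (inord j) (inord k) * ug u k j i ^+ 2.
Definition G2 (u : 'rV[R]_N) k j i := ug u k j i ^+ 2.

Lemma qfH_T (u : 'rV[R]_N) : qf (Hmx hbar mm dx dy dz U) u =
  hbar ^+ 2 / (2 * mm) * (dy * dz / dx * T true true false nz ny nx (Fx u)
   + dx * dz / dy * T true false true nz ny nx (Fy u)
   + dx * dy / dz * T false true true nz ny nx (Fz u))
  + dx * dy * dz * T true true true nz ny nx (Gp u).
Proof.
rewrite qf_H // /Kin /Pot Ttf Tft Tff Ttt; congr (_ + _ * _).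
apply: eq_bigr => k _; apply: eq_bigr => j _; apply: eq_bigr => i _.
by rewrite /Gp !inord_val mulrA.
Qed.

Lemma qfDV_T (u : 'rV[R]_N) : qf (DV dx dy dz nx ny nz) u =
  dx * dy * dz * T true true true nz ny nx (G2 u).
Proof. by rewrite qf_DV Ttt. Qed.

End TForms.

Section Sum3.
Variable R : realType.
Lemma sum3_lin n1 n2 n3 (C a b d e : R) (X Y Z P : 'I_n1 -> 'I_n2 -> 'I_n3 -> R) :
  \sum_(i < n1) \sum_(j < n2) \sum_(k < n3)
     (C * (a * X i j k + b * Y i j k + d * Z i j k) + e * P i j k) =
  C * (a * (\sum_(i < n1) \sum_(j < n2) \sum_(k < n3) X i j k)
     + b * (\sum_(i < n1) \sum_(j < n2) \sum_(k < n3) Y i j k)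
     + d * (\sum_(i < n1) \sum_(j < n2) \sum_(k < n3) Z i j k))
  + e * (\sum_(i < n1) \sum_(j < n2) \sum_(k < n3) P i j k).
Proof.
have sD : forall X Y : 'I_n1 -> 'I_n2 -> 'I_n3 -> R,
    \sum_(i < n1) \sum_(j < n2) \sum_(k < n3) (X i j k + Y i j k) =
    \sum_(i < n1) \sum_(j < n2) \sum_(k < n3) X i j k +
    \sum_(i < n1) \sum_(j < n2) \sum_(k < n3) Y i j k.
  move=> X0 Y0; rewrite -big_split; apply: eq_bigr => i _.
  rewrite -big_split; apply: eq_bigr => j _; exact: big_split.
have sZ : forall (c : R) (X : 'I_n1 -> 'I_n2 -> 'I_n3 -> R),
    \sum_(i < n1) \sum_(j < n2) \sum_(k < n3) (c * X i j k) =
    c * \sum_(i < n1) \sum_(j < n2) \sum_(k < n3) X i j k.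
  move=> c X0; rewrite mulr_sumr; apply: eq_bigr => i _.
  rewrite mulr_sumr; apply: eq_bigr => j _; by rewrite mulr_sumr.
rewrite (sD (fun i j k => C * _)) (sZ C) (sZ e).
rewrite (sD (fun i j k => _ + _)) (sD (fun i j k => a * _)).
by rewrite !sZ.
Qed.
End Sum3.

Section Decomp.
Variable R : realType.
Variables (hbar mm dx dy dz : R) (nx ny nz : nat).
Variable U : 'I_nx.+1 -> 'I_ny.+1 -> 'I_nz.+1 -> R.
Local Notation N := (nz.+1 * (ny.+1 * nx.+1))%N.
Hypotheses (dx0 : dx != 0) (dy0 : dy != 0) (dz0 : dz != 0).
Hypotheses (nx0 : (0 < nx)%N) (ny0 : (0 < ny)%N) (nz0 : (0 < nz)%N).

Definition cellvec (w : 'rV[R]_N) (i j k : nat) : 'rV[R]_(2 * (2 * 2)) :=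
  \row_p ug w (k + (mxtens_unindex p).1) (j + (mxtens_unindex (mxtens_unindex p).2).1)
     (i + (mxtens_unindex (mxtens_unindex p).2).2).

Lemma ug_cell w i j k a b c : (a < 2)%N -> (b < 2)%N -> (c < 2)%N ->
  ug (cellvec w i j k) a b c = ug w (k + a) (j + b) (i + c).
Proof. by move=> ha hb hc; rewrite /ug /nid /cellvec mxE !mxtens_indexK /= !inordK. Qed.

Definition Uc (i : 'I_nx) (j : 'I_ny) (k : 'I_nz) :=
  fun (a : 'I_2) (b : 'I_2) (c : 'I_2) => U (inord (i + a)) (inord (j + b)) (inord (k + c)).

Lemma cell_T w (i : 'I_nx) (j : 'I_ny) (k : 'I_nz) :
  qf (Hmx hbar mm dx dy dz (Uc i j k)) (cellvec w i j k) =
  hbar ^+ 2 / (2 * mm) * (dy * dz / dx * T true true false 1 1 1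
        (fun a b c => Fx w (k + a) (j + b) (i + c))
   + dx * dz / dy * T true false true 1 1 1 (fun a b c => Fy w (k + a) (j + b) (i + c))
   + dx * dy / dz * T false true true 1 1 1 (fun a b c => Fz w (k + a) (j + b) (i + c)))
  + dx * dy * dz * T true true true 1 1 1 (fun a b c => Gp U w (k + a) (j + b) (i + c)).
Proof.
rewrite qfH_T //; congr (_ * (_ * _ + _ * _ + _ * _) + _ * _).
- apply: T_ext => a b c ha hb hc; rewrite /Fx !ug_cell ?addnS //; lia.
- apply: T_ext => a b c ha hb hc; rewrite /Fy !ug_cell ?addnS //; lia.
- apply: T_ext => a b c ha hb hc; rewrite /Fz !ug_cell ?addnS //; lia.
- apply: T_ext => a b c ha hb hc; rewrite /Gp !ug_cell //; try lia.
  rewrite /Uc !inordK //; lia.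
Qed.

Lemma decomp_H w : qf (Hmx hbar mm dx dy dz U) w =
  \sum_(i < nx) \sum_(j < ny) \sum_(k < nz)
     qf (Hmx hbar mm dx dy dz (Uc i j k)) (cellvec w i j k).
Proof.
under eq_bigr => i _ do under eq_bigr => j _ do under eq_bigr => k _ do rewrite cell_T.
by rewrite sum3_lin qfH_T // !T_dec.
Qed.

Lemma cell_DV w (i : 'I_nx) (j : 'I_ny) (k : 'I_nz) :
  qf (DV dx dy dz 1 1 1) (cellvec w i j k) =
  dx * dy * dz * T true true true 1 1 1 (fun a b c => G2 w (k + a) (j + b) (i + c)).
Proof.
rewrite qfDV_T; congr (_ * _); apply: T_ext => a b c ha hb hc.
by rewrite /G2 ug_cell.
Qed.

Lemma decomp_DV w : qf (DV dx dy dz nx ny nz) w =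
  \sum_(i < nx) \sum_(j < ny) \sum_(k < nz) qf (DV dx dy dz 1 1 1) (cellvec w i j k).
Proof.
under eq_bigr => i _ do under eq_bigr => j _ do under eq_bigr => k _ do rewrite cell_DV.
rewrite qfDV_T T_dec // mulr_sumr; apply: eq_bigr => i _.
rewrite mulr_sumr; apply: eq_bigr => j _; by rewrite mulr_sumr.
Qed.

End Decomp.

Section RegionSpec.
Variable R : realType.
Variables (hbar mm dx dy dz : R) (nx ny nz : nat).
Variable U : 'I_nx.+1 -> 'I_ny.+1 -> 'I_nz.+1 -> R.
Local Notation N := (nz.+1 * (ny.+1 * nx.+1))%N.
Hypotheses (hb0 : 0 < hbar) (dx0 : 0 < dx) (dy0 : 0 < dy) (dz0 : 0 < dz).

Local Notation S := (DVinvsqrt dx dy dz nx ny nz).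
Local Notation H := (Hmx hbar mm dx dy dz U).
Local Notation A := (hbar^-1 *: (S *m H *m S)).

Lemma A_sym : A^T = A.
Proof.
rewrite DVinvsqrtE; apply: norm_sym.
by apply: H_sym; rewrite gt_eqF.
Qed.

Lemma R2 (w : 'rV[R]_N) :
  hbar^-1 * `|qf H w| <= spectral_radius A * qf (DV dx dy dz nx ny nz) w.
Proof.
have dvp := @dvr_pos R dx dy dz nx ny nz dx0 dy0 dz0.
have [x hx] := norm_surj dvp w.
have := spec_ge x A_sym.
rewrite DVinvsqrtE norm_qf (norm_dot dvp) hx -DV_diagE normrM gtr0_norm //.
by rewrite invr_gt0.
Qed.

Lemma R3 (M : R) : (forall w : 'rV[R]_N,
  hbar^-1 * `|qf H w| <= M * qf (DV dx dy dz nx ny nz) w) ->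
  spectral_radius A <= M.
Proof.
move=> hM; have dvp := @dvr_pos R dx dy dz nx ny nz dx0 dy0 dz0.
apply: spec_le; first by rewrite !muln_gt0.
  exact: A_sym.
move=> x; rewrite DVinvsqrtE norm_qf (norm_dot dvp) normrM gtr0_norm ?invr_gt0 //.
by rewrite -DV_diagE.
Qed.

Lemma rho_ge0 : 0 <= spectral_radius A.
Proof.
have := spec_ge (delta_mx 0 ord0) A_sym.
have -> : dot (delta_mx 0 ord0 : 'rV[R]_N) (delta_mx 0 ord0) = 1.
  rewrite dotE (bigD1 ord0) //= !mxE eqxx mulr1 big1 ?addr0 // => p /negPf pn.
  by rewrite !mxE pn mulr0.
by rewrite mulr1; apply: le_trans.
Qed.

End RegionSpec.

Section Pos.
Variable R : realType.
Variables (hbar mm dx dy dz : R) (nx ny nz : nat).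
Variable U : 'I_nx.+1 -> 'I_ny.+1 -> 'I_nz.+1 -> R.
Local Notation N := (nz.+1 * (ny.+1 * nx.+1))%N.
Hypotheses (nx0 : (0 < nx)%N).

Lemma ug_delta a0 b0 c0 k j i :
  (k <= nz)%N -> (j <= ny)%N -> (i <= nx)%N ->
  (a0 <= nz)%N -> (b0 <= ny)%N -> (c0 <= nx)%N ->
  ug (delta_mx 0 (nid nx ny nz a0 b0 c0) : 'rV[R]_N) k j i =
  ((k == a0) && (j == b0) && (i == c0))%:R.
Proof.
move=> hk hj hi ha hb hc; rewrite /ug mxE /= /nid.
rewrite !(inj_eq (can_inj (@mxtens_indexK _ _))) !xpair_eqE.
rewrite !(inj_eq (can_inj (@mxtens_indexK _ _))) !xpair_eqE -!val_eqE /= !inordK //.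
by rewrite andbA.
Qed.

Lemma ugD (u v : 'rV[R]_N) k j i : ug (u + v) k j i = ug u k j i + ug v k j i.
Proof. by rewrite /ug mxE. Qed.
Lemma ugB (u v : 'rV[R]_N) k j i : ug (u - v) k j i = ug u k j i - ug v k j i.
Proof. by rewrite /ug !mxE. Qed.

Let a : 'rV[R]_N := delta_mx 0 (nid nx ny nz 0 0 0).
Let b : 'rV[R]_N := delta_mx 0 (nid nx ny nz 0 0 1).

Lemma px k j i : (k < nz + true)%N -> (j < ny + true)%N -> (i < nx + false)%N ->
  Fx (a + b) k j i = -4 * ((k == 0) && (j == 0) && (i == 0))%:R + Fx (a - b) k j i.
Proof.
move=> hk hj hi; rewrite /Fx ugD ugB ugD ugB /a /b !ug_delta //; try lia.
by case: k {hk} => [|k]; case: j {hj} => [|j]; case: i {hi} => [|[|i]] /=; ring.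
Qed.

Lemma py k j i : (k < nz + true)%N -> (j < ny + false)%N -> (i < nx + true)%N ->
  Fy (a + b) k j i = Fy (a - b) k j i.
Proof.
move=> hk hj hi; rewrite /Fy ugD ugB ugD ugB /a /b !ug_delta //; try lia.
by case: k {hk} => [|k]; case: j {hj} => [|j]; case: i {hi} => [|[|i]] /=; ring.
Qed.

Lemma pz k j i : (k < nz + false)%N -> (j < ny + true)%N -> (i < nx + true)%N ->
  Fz (a + b) k j i = Fz (a - b) k j i.
Proof.
move=> hk hj hi; rewrite /Fz ugD ugB ugD ugB /a /b !ug_delta //; try lia.
by case: k {hk} => [|k]; case: j {hj} => [|j]; case: i {hi} => [|[|i]] /=; ring.
Qed.

Lemma pp k j i : (k < nz + true)%N -> (j < ny + true)%N -> (i < nx + true)%N ->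
  Gp U (a + b) k j i = Gp U (a - b) k j i.
Proof.
move=> hk hj hi; rewrite /Gp ugD ugB /a /b !ug_delta //; try lia.
by case: k {hk} => [|k]; case: j {hj} => [|j]; case: i {hi} => [|[|i]] /=; ring.
Qed.

Lemma ord_neq0 n (k : 'I_n.+1) : k != ord0 -> ((k : nat) == 0%N) = false.
Proof. by move=> kn; apply/negbTE; apply: contra kn => /eqP h; apply/eqP/val_inj. Qed.

Lemma TD : T true true false nz ny nx
   (fun k j i => ((k == 0) && (j == 0) && (i == 0))%:R : R) = tw R nz 0 * tw R ny 0.
Proof.
rewrite Ttf; case: nx nx0 U a b => // n _ _ _ _.
rewrite (bigD1 ord0) //= [X in _ + X]big1 ?addr0; last first.
  move=> k k0; have kn := ord_neq0 k0; apply: big1 => j _; apply: big1 => i _.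
  by rewrite kn mulr0.
rewrite (bigD1 ord0) //= [X in _ + X]big1 ?addr0; last first.
  move=> j j0; have jn := ord_neq0 j0; apply: big1 => i _.
  by rewrite jn mulr0.
rewrite (bigD1 ord0) //= [X in _ + X]big1 ?addr0 ?mulr1 //.
by move=> i i0; rewrite (ord_neq0 i0) mulr0.
Qed.

Lemma qfH_nz : hbar != 0 -> mm != 0 -> dx != 0 -> dy != 0 -> dz != 0 ->
  exists w : 'rV[R]_N, qf (Hmx hbar mm dx dy dz U) w != 0.
Proof.
move=> hh hm hx hy hz.
have key : qf (Hmx hbar mm dx dy dz U) (a + b) - qf (Hmx hbar mm dx dy dz U) (a - b)
    = hbar ^+ 2 / (2 * mm) * (dy * dz / dx) * (-4) * (tw R nz 0 * tw R ny 0).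
  rewrite !qfH_T //.
  have ex : T true true false nz ny nx (Fx (a + b)) =
      -4 * T true true false nz ny nx
        (fun k j i => ((k == 0) && (j == 0) && (i == 0))%:R : R)
      + T true true false nz ny nx (Fx (a - b)).
    rewrite -T_lin; apply: T_ext => k j i hk hj hi; exact: px.
  have ey : T true false true nz ny nx (Fy (a + b)) = T true false true nz ny nx (Fy (a - b)).
    apply: T_ext => k j i hk hj hi; exact: py.
  have ez : T false true true nz ny nx (Fz (a + b)) = T false true true nz ny nx (Fz (a - b)).
    apply: T_ext => k j i hk hj hi; exact: pz.
  have ep : T true true true nz ny nx (Gp U (a + b)) = T true true true nz ny nx (Gp U (a - b)).
    apply: T_ext => k j i hk hj hi; exact: pp.
  rewrite ex ey ez ep TD; ring.
case: (eqVneq (qf (Hmx hbar mm dx dy dz U) (a + b)) 0) => h1; last by exists (a + b).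
case: (eqVneq (qf (Hmx hbar mm dx dy dz U) (a - b)) 0) => h2; last by exists (a - b).
exfalso; move: key; rewrite h1 h2 subrr => /esym/eqP.
rewrite !mulf_eq0 !invr_eq0 !mulf_eq0 (negbTE hh) (negbTE hm) (negbTE hx).
by rewrite (negbTE hy) (negbTE hz) oppr_eq0 !pnatr_eq0.
Qed.

End Pos.

Local Open Scope classical_set_scope.

Lemma qfDV_ge0 (R : realType) (dx dy dz : R) nx ny nz (w : 'rV[R]_(nz.+1 * (ny.+1 * nx.+1))) :
  0 < dx -> 0 < dy -> 0 < dz -> 0 <= qf (DV dx dy dz nx ny nz) w.
Proof.
move=> hx hy hz; have dvp := @dvr_pos R dx dy dz nx ny nz hx hy hz.
have [x hx'] := norm_surj dvp w.
by rewrite DV_diagE -hx' -(norm_dot dvp) dot_ge0.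
Qed.

Lemma sum3_bound (R : realType) n1 n2 n3 (c M : R) (X Y : 'I_n1 -> 'I_n2 -> 'I_n3 -> R) :
  0 <= c -> (forall i j k, c * `|X i j k| <= M * Y i j k) ->
  c * `|\sum_(i < n1) \sum_(j < n2) \sum_(k < n3) X i j k| <=
  M * \sum_(i < n1) \sum_(j < n2) \sum_(k < n3) Y i j k.
Proof.
move=> c0 h; rewrite !mulr_sumr.
apply: le_trans (ler_wpM2l c0 (ler_norm_sum _ _ _)) _; rewrite mulr_sumr.
apply: ler_sum => i _; rewrite mulr_sumr.
apply: le_trans (ler_wpM2l c0 (ler_norm_sum _ _ _)) _; rewrite mulr_sumr.
apply: ler_sum => j _; rewrite mulr_sumr.
apply: le_trans (ler_wpM2l c0 (ler_norm_sum _ _ _)) _; rewrite mulr_sumr.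
by apply: ler_sum => k _.
Qed.

Theorem lemma5 (R : realType) (hbar m dx dy dz : R) (nx ny nz : nat)
  (U : 'I_nx.+1 -> 'I_ny.+1 -> 'I_nz.+1 -> R) :
  0 < hbar -> 0 < m -> 0 < dx -> 0 < dy -> 0 < dz ->
  (0 < nx)%N -> (0 < ny)%N -> (0 < nz)%N ->
  inf [set t : R | exists (i : 'I_nx) (j : 'I_ny) (k : 'I_nz),
                     t = cfl_cell hbar m dx dy dz U i j k]
  <= cfl_gen hbar m dx dy dz U.
Proof.
move=> hb hm hx hy hz nx0 ny0 nz0.
set Sset := [set t : R | _].
rewrite /cfl_gen.
set rg := spectral_radius _.
have rg0 : 0 <= rg := rho_ge0 hbar m U hx hy hz.
pose rc (i : 'I_nx) (j : 'I_ny) (k : 'I_nz) :=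
  spectral_radius (hbar^-1 *: (DVinvsqrt dx dy dz 1 1 1 *m
     Hmx hbar m dx dy dz (Uc U i j k) *m DVinvsqrt dx dy dz 1 1 1)).
have cellE i j k : cfl_cell hbar m dx dy dz U i j k = 2 / rc i j k by [].
have rc0 i j k : 0 <= rc i j k := rho_ge0 hbar m (Uc U i j k) hx hy hz.
have lb : lbound Sset 0.
  by move=> t [i [j [k ->]]]; rewrite cellE divr_ge0.
have hlb : has_lbound Sset by exists 0.
have inf_le i j k : inf Sset <= 2 / rc i j k.
  by apply: (ge_inf hlb); exists i, j, k; rewrite cellE.
case: (lerP (inf Sset) 0) => hm0.
  by apply: le_trans hm0 _; rewrite divr_ge0.
set mI := inf Sset in hm0 inf_le *.
have rc_bound i j k : rc i j k <= 2 / mI.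
  have := inf_le i j k.
  case: (eqVneq (rc i j k) 0) => [->|ne]; first by rewrite invr0 mulr0 => /(lt_le_trans hm0); rewrite ltxx.
  have rcp : 0 < rc i j k by rewrite lt_def ne rc0.
  by rewrite ler_pdivlMr // ler_pdivlMr // mulrC.
have rg_le : rg <= 2 / mI.
  apply: R3 => // w.
  rewrite (decomp_H hbar m U _ _ _ nx0 ny0 nz0) ?gt_eqF //.
  rewrite (decomp_DV dx dy dz nx0 ny0 nz0).
  apply: sum3_bound; first by rewrite invr_ge0 ltW.
  move=> i j k; apply: le_trans (R2 m (Uc U i j k) hb hx hy hz _) _.
  by apply: ler_wpM2r; [exact: qfDV_ge0 | exact: rc_bound].
have rg_pos : 0 < rg.
  have [w hw] := qfH_nz U nx0 (negbT (gt_eqF hb)) (negbT (gt_eqF hm)) (negbT (gt_eqF hx)) (negbT (gt_eqF hy)) (negbT (gt_eqF hz)).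
  have := R2 m U hb hx hy hz w.
  have : 0 < hbar^-1 * `|qf (Hmx hbar m dx dy dz U) w| by rewrite mulr_gt0 ?invr_gt0 ?normr_gt0.
  move=> h1 h2; have h3 := lt_le_trans h1 h2.
  rewrite lt_def rg0 andbT; apply/negP => /eqP e; by move: h3; rewrite -/rg e mul0r ltxx.
by rewrite ler_pdivlMr // mulrC -ler_pdivlMr.
Qed.
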